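(* Let $\mathbb F_q$ be a finite field with $q>2$ elements, $\mathbb F_q^*=\mathbb F_q\setminus\{0\}$, and let $\mathcal{SC}\subset\mathbb Z[\mathrm{SL}_2(\mathbb F_q)]$ be the $\mathbb Z$-span of the seven elements $$A=\left(\begin{array}{cc}\mathbb F_q^*&0\\0&\mathbb F_q^*\end{array}\right),\ B=\left(\begin{array}{cc}0&\mathbb F_q^*\\\mathbb F_q^*&0\end{array}\right),\ C=\left(\begin{array}{cc}\mathbb F_q^*&\mathbb F_q^*\\\mathbb F_q^*&\mathbb F_q^*\end{array}\right),$$ $$D_+=\left(\begin{array}{cc}\mathbb F_q^*&\mathbb F_q^*\\0&\mathbb F_q^*\end{array}\right),\ D_-=\left(\begin{array}{cc}\mathbb F_q^*&0\\\mathbb F_q^*&\mathbb F_q^*\end{array}\right),\ E_+=\left(\begin{array}{cc}\mathbb F_q^*&\mathbb F_q^*\\\mathbb F_q^*&0\end{array}\right),\ E_-=\left(\begin{array}{cc}0&\mathbb F_q^*\\\mathbb F_q^*&\mathbb F_q^*\end{array}\right),$$ which is a subring of $\mathbb Z[\mathrm{SL}_2(\mathbb F_q)]$. Then the $\mathbb Q$-algebra $\mathcal{SC}_{\mathbb Q}=\mathcal{SC}\otimes_{\mathbb Z}\mathbb Q$ is semi-simple and isomorphic to $\mathbb Q\oplus\mathbb Q\oplus\mathbb Q\oplus M_2(\mathbb Q)$, where $M_2(\mathbb Q)$ denotes the algebra of $2\times 2$ rational matrices.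
   Context: For subsets $\mathcal A,\mathcal B,\mathcal C,\mathcal D$ of $\mathbb F_q$, the symbol $\left(\begin{array}{cc}\mathcal A&\mathcal B\\\mathcal C&\mathcal D\end{array}\right)$ denotes the element $\sum \left(\begin{array}{cc}a&b\\c&d\end{array}\right)$ of $\mathbb Z[\mathrm{SL}_2(\mathbb F_q)]$, where the sum runs over all $(a,b,c,d)\in\mathcal A\times\mathcal B\times\mathcal C\times\mathcal D$ with $ad-bc=1$; an entry $0$ stands for the singleton $\{0\}$. So these are the sums of all matrices in $\mathrm{SL}_2(\mathbb F_q)$ with a given support. $\mathcal{SC}_{\mathbb Q}$ is a 7-dimensional $\mathbb Q$-algebra (with identity $\frac{1}{q-1}A$). *)

(* Defs.v *)
From HB Require Import structures.
From mathcomp Require Import all_boot all_order all_algebra.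
Set Implicit Arguments. Unset Strict Implicit. Unset Printing Implicit Defensive.
Import GRing.Theory.
Local Open Scope ring_scope.

(* Elements of Q[SL_2(F)] are represented as rational-valued functions on
   2x2 matrices over F supported on SL_2(F) (matrices with ad - bc = 1). *)
Definition grp_alg (F : finFieldType) := {ffun 'M[F]_2 -> rat}.

Definition gmul (F : finFieldType) (f g : grp_alg F) : grp_alg F :=
  [ffun x => \sum_(y : 'M[F]_2) \sum_(z : 'M[F]_2 | y *m z == x) f y * g z].

Definition in_SL2 (F : finFieldType) (M : 'M[F]_2) : bool :=
  M 0 0 * M 1 1 - M 0 1 * M 1 0 == 1.

Definition supp_sum (F : finFieldType) (pa pb pc pd : pred F) : grp_alg F :=
  [ffun M => if [&& in_SL2 M, pa (M 0 0), pb (M 0 1), pc (M 1 0) & pd (M 1 1)]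
             then 1 else 0].

Definition nz (F : finFieldType) : pred F := fun x => x != 0.
Definition zr (F : finFieldType) : pred F := fun x => x == 0.

Definition SC_A  (F : finFieldType) := supp_sum (@nz F) (@zr F) (@zr F) (@nz F).
Definition SC_B  (F : finFieldType) := supp_sum (@zr F) (@nz F) (@nz F) (@zr F).
Definition SC_C  (F : finFieldType) := supp_sum (@nz F) (@nz F) (@nz F) (@nz F).
Definition SC_Dp (F : finFieldType) := supp_sum (@nz F) (@nz F) (@zr F) (@nz F).
Definition SC_Dm (F : finFieldType) := supp_sum (@nz F) (@zr F) (@nz F) (@nz F).
Definition SC_Ep (F : finFieldType) := supp_sum (@nz F) (@nz F) (@nz F) (@zr F).
Definition SC_Em (F : finFieldType) := supp_sum (@zr F) (@nz F) (@nz F) (@nz F).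

Definition SC_gens (F : finFieldType) : seq (grp_alg F) :=
  [:: SC_A F; SC_B F; SC_C F; SC_Dp F; SC_Dm F; SC_Ep F; SC_Em F].

Definition in_SCQ (F : finFieldType) (x : grp_alg F) : Prop :=
  exists c : 'I_7 -> rat,
    x = [ffun M => \sum_(i < 7) c i * nth 0 (SC_gens F) i M].

Definition gscale (F : finFieldType) (a : rat) (x : grp_alg F) : grp_alg F :=
  [ffun M => a * x M].

Definition target := (rat * rat * rat * 'M[rat]_2)%type.

Definition tscale (a : rat) (t : target) : target :=
  (a * t.1.1.1, a * t.1.1.2, a * t.1.2, a *: t.2).

(* Main.v *)
Require Import Defs.
From HB Require Import structures.
From mathcomp Require Import all_boot all_order all_algebra.
From mathcomp Require Import ring lra.
Set Implicit Arguments. Unset Strict Implicit. Unset Printing Implicit Defensive.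
Import GRing.Theory.
Local Open Scope ring_scope.

Definition mk (R : Type) (a b c d : R) : 'M[R]_2 :=
  \matrix_(i < 2, j < 2) if val i == 0%N then (if val j == 0%N then a else b)
                         else (if val j == 0%N then c else d).

Lemma mk00 (R : Type) (a b c d : R) : mk a b c d 0 0 = a.
Proof. by rewrite mxE. Qed.
Lemma mk01 (R : Type) (a b c d : R) : mk a b c d 0 1 = b.
Proof. by rewrite mxE. Qed.
Lemma mk10 (R : Type) (a b c d : R) : mk a b c d 1 0 = c.
Proof. by rewrite mxE. Qed.
Lemma mk11 (R : Type) (a b c d : R) : mk a b c d 1 1 = d.
Proof. by rewrite mxE. Qed.

Lemma mk_eta (R : Type) (M : 'M[R]_2) : M = mk (M 0 0) (M 0 1) (M 1 0) (M 1 1).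
Proof.
apply/matrixP => i j; rewrite mxE.
case: i => [[|[|i]] Hi] //; case: j => [[|[|j]] Hj] //=;
 by congr (M _ _); apply: val_inj.
Qed.

Lemma mk_mul (R : pzRingType) (a b c d e f g h : R) :
  mk a b c d *m mk e f g h = mk (a*e+b*g) (a*f+b*h) (c*e+d*g) (c*f+d*h).
Proof.
apply/matrixP => i j; rewrite !mxE !big_ord_recr big_ord0 /= add0r !mxE.
by case: i => [[|[|i]] Hi] //; case: j => [[|[|j]] Hj].
Qed.

Lemma mk_inj (R : Type) (a b c d a' b' c' d' : R) :
  mk a b c d = mk a' b' c' d' -> [/\ a = a', b = b', c = c' & d = d'].
Proof.
move=> E; split; [move: (congr1 (fun M : 'M[R]_2 => M 0 0) E)| move: (congr1 (fun M : 'M[R]_2 => M 0 1) E)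
 |move: (congr1 (fun M : 'M[R]_2 => M 1 0) E)|move: (congr1 (fun M : 'M[R]_2 => M 1 1) E)];
 by rewrite /= !mxE.
Qed.

Lemma mk_add (R : zmodType) (a b c d a' b' c' d' : R) :
  mk a b c d + mk a' b' c' d' = mk (a+a') (b+b') (c+c') (d+d').
Proof.
apply/matrixP => i j; rewrite !mxE.
by case: i => [[|[|i]] Hi] //; case: j => [[|[|j]] Hj].
Qed.

Lemma mk_scale (R : pzRingType) (k a b c d : R) :
  k *: mk a b c d = mk (k*a) (k*b) (k*c) (k*d).
Proof.
apply/matrixP => i j; rewrite !mxE.
by case: i => [[|[|i]] Hi] //; case: j => [[|[|j]] Hj].
Qed.

Lemma mk1 (R : pzRingType) : (1%:M : 'M[R]_2) = mk 1 0 0 1.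
Proof.
apply/matrixP => i j; rewrite !mxE.
by case: i => [[|[|i]] Hi] //; case: j => [[|[|j]] Hj].
Qed.

Section G.
Variable F : finFieldType.
Local Notation M2 := 'M[F]_2.

Definition pat := (bool * bool * bool * bool)%type.
Definition pz (M : M2) : pat := (M 0 0 != 0, M 0 1 != 0, M 1 0 != 0, M 1 1 != 0).
Definition pf (f : pat -> rat) : grp_alg F :=
  [ffun M => if in_SL2 M then f (pz M) else 0].

Definition patn (n : nat) : pat :=
  match n with
  | 0 => (true,false,false,true) | 1 => (false,true,true,false)
  | 2 => (true,true,true,true) | 3 => (true,true,false,true)
  | 4 => (true,false,true,true) | 5 => (true,true,true,false)
  | _ => (false,true,true,true) end.
Definition valid (p : pat) : bool := (p.1.1.1 && p.2) || (p.1.1.2 && p.1.2).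

Lemma valid_pz M : in_SL2 M -> valid (pz M).
Proof.
rewrite /in_SL2 /valid /pz /=.
move=> /eqP H.
case: (M 0 0 =P 0) => [a0|a0] /=.
  have : M 0 1 * M 1 0 != 0 by rewrite -oppr_eq0 -(add0r (- _)); move: H; rewrite a0 mul0r => ->; rewrite oner_eq0.
  by rewrite mulf_eq0 negb_or.
case: (M 1 1 =P 0) => [d0|d0] //=.
have : M 0 1 * M 1 0 != 0 by rewrite -oppr_eq0 -(add0r (- _)); move: H; rewrite d0 mulr0 => ->; rewrite oner_eq0.
by rewrite mulf_eq0 negb_or.
Qed.

Lemma valid_patn p : valid p -> exists2 k, (k < 7)%N & p = patn k.
Proof.
case: p => [[[[] []] []] []] //= _;
 by [exists 0%N|exists 1%N|exists 2%N|exists 3%N|exists 4%N|exists 5%N|exists 6%N].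
Qed.

Lemma gen_pf (k : 'I_7) : nth 0 (SC_gens F) k = pf (fun p => (p == patn k)%:R).
Proof.
apply/ffunP => M.
case: k => [[|[|[|[|[|[|[|k]]]]]]] Hk] //=;
 rewrite /SC_A /SC_B /SC_C /SC_Dp /SC_Dm /SC_Ep /SC_Em /supp_sum !ffunE /pz /nz /zr /=;
 case: (in_SL2 M) => //=;
 case: (M 0 0 == 0); case: (M 0 1 == 0); case: (M 1 0 == 0); case: (M 1 1 == 0) => //.
Qed.

Lemma sum7 (f : pat -> rat) p : valid p ->
  \sum_(k < 7) f (patn k) * (p == patn k)%:R = f p.
Proof.
rewrite !big_ord_recr big_ord0 /=.
case: p => [[[[] []] []] []] //= _; rewrite ?mulr0 ?mulr1 ?add0r ?addr0 //.
Qed.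

Lemma pf_SCQ f : in_SCQ (pf f).
Proof.
exists (fun k => f (patn k)); apply/ffunP => M; rewrite !ffunE.
under eq_bigr => k _ do rewrite gen_pf ffunE.
case H: (in_SL2 M); last by rewrite big1 // => k _; rewrite mulr0.
by rewrite sum7 // valid_pz.
Qed.

Lemma SCQ_pf x : in_SCQ x -> exists f, x = pf f.
Proof.
case=> c ->; exists (fun p => \sum_(k < 7) c k * (p == patn k)%:R).
apply/ffunP => M; rewrite !ffunE.
under eq_bigr => k _ do rewrite gen_pf ffunE.
by case: (in_SL2 M) => //; rewrite big1 // => k _; rewrite mulr0.
Qed.

Lemma pf_eq f g : (forall k, (k < 7)%N -> f (patn k) = g (patn k)) -> pf f = pf g.
Proof.
move=> H; apply/ffunP => M; rewrite !ffunE.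
case S: (in_SL2 M) => //.
by have [k Hk ->] := valid_patn (valid_pz S); apply: H.
Qed.

End G.
Arguments pf {F} f.

Section G.
Variable F : finFieldType.
Local Notation M2 := 'M[F]_2.

Lemma gmulE (f g : grp_alg F) x :
  gmul f g x = \sum_y \sum_z (y *m z == x)%:R * (f y * g z).
Proof.
rewrite ffunE; apply: eq_bigr => y _; rewrite big_mkcond; apply: eq_bigr => z _.
by case: eqP; rewrite ?mul1r ?mul0r.
Qed.

Lemma collapse (X : M2 -> rat) a : \sum_w (a == w)%:R * X w = X a.
Proof.
rewrite (bigD1 a) //= eqxx mul1r big1 ?addr0 // => w; rewrite eq_sym => /negbTE ->.
by rewrite mul0r.
Qed.

Lemma sw4 (T : M2 -> M2 -> M2 -> M2 -> rat) :
  \sum_w \sum_v \sum_y \sum_z T w v y z = \sum_y \sum_z \sum_v \sum_w T w v y z.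
Proof.
transitivity (\sum_w \sum_y \sum_z \sum_v T w v y z).
  apply: eq_bigr => w _; rewrite exchange_big; apply: eq_bigr => y _; by rewrite exchange_big.
rewrite exchange_big; apply: eq_bigr => y _; rewrite exchange_big; apply: eq_bigr => z _.
by rewrite exchange_big.
Qed.

Lemma sw3 (T : M2 -> M2 -> M2 -> rat) :
  \sum_u \sum_z \sum_v T u z v = \sum_z \sum_v \sum_u T u z v.
Proof. rewrite exchange_big; apply: eq_bigr => z _; by rewrite exchange_big. Qed.

Lemma gmulA (f g h : grp_alg F) : gmul (gmul f g) h = gmul f (gmul g h).
Proof.
apply/ffunP => x; rewrite !gmulE.
transitivity (\sum_y \sum_z \sum_v ((y *m z) *m v == x)%:R * (f y * g z * h v)).
  transitivity (\sum_w \sum_v \sum_y \sum_z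
     ((w *m v == x)%:R * (y *m z == w)%:R * (f y * g z * h v))).
    apply: eq_bigr => w _; apply: eq_bigr => v _; rewrite gmulE mulr_suml mulr_sumr.
    apply: eq_bigr => y _; rewrite mulr_suml mulr_sumr; apply: eq_bigr => z _; ring.
  rewrite sw4; apply: eq_bigr => y _; apply: eq_bigr => z _; apply: eq_bigr => v _.
  rewrite -(collapse (fun w => (w *m v == x)%:R * (f y * g z * h v))).
  apply: eq_bigr => w _.
  by case: eqP => _ /=; ring.
apply: eq_bigr => y _.
transitivity (\sum_u \sum_z \sum_v
     ((y *m u == x)%:R * (z *m v == u)%:R * (f y * g z * h v))); last first.
  apply: eq_bigr => u _; rewrite gmulE mulr_sumr mulr_sumr.
  apply: eq_bigr => z _; rewrite mulr_sumr mulr_sumr; apply: eq_bigr => v _; ring.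
rewrite sw3; apply: eq_bigr => z _; apply: eq_bigr => v _.
rewrite -mulmxA -(collapse (fun u => (y *m u == x)%:R * (f y * g z * h v)) (z *m v)).
apply: eq_bigr => u _.
by case: eqP => _ /=; ring.
Qed.

End G.

Section G.
Variable F : finFieldType.
Local Notation M2 := 'M[F]_2.
Local Notation q := (#|F|%:R : rat).

Definition inv2 (y : M2) : M2 := mk (y 1 1) (- y 0 1) (- y 1 0) (y 0 0).

Lemma mk_inv (a b c d : F) : a*d - b*c = 1 ->
  mk a b c d *m mk d (-b) (-c) a = 1%:M /\ mk d (-b) (-c) a *m mk a b c d = 1%:M.
Proof.
move=> H; rewrite !mk_mul mk1; split; congr mk; (try rewrite -H); ring.
Qed.

Lemma inv2_mul y : in_SL2 y -> y *m inv2 y = 1%:M /\ inv2 y *m y = 1%:M.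
Proof.
move=> /eqP H; have Ey := mk_eta y; rewrite /inv2.
have [H1 H2] := mk_inv H.
split; [by rewrite {1}Ey H1 | by rewrite [X in _ *m X = _]Ey H2].
Qed.

Lemma gmul_SL (f g : grp_alg F) M : (forall y, f y != 0 -> in_SL2 y) ->
  gmul f g M = \sum_y f y * g (inv2 y *m M).
Proof.
move=> Hf; rewrite ffunE; apply: eq_bigr => y _.
case: (f y =P 0) => [->|/eqP nz].
  by rewrite mul0r big1 // => z _; rewrite mul0r.
have [H1 H2] := inv2_mul (Hf _ nz).
rewrite (big_pred1 (inv2 y *m M)) // => z /=.
apply/eqP/eqP => [<-|->]; first by rewrite mulmxA H2 mul1mx.
by rewrite mulmxA H1 mul1mx.
Qed.

Lemma sum_supp (J : finType) (P : pred J) (h : J -> M2) (h' : M2 -> J)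
   (f : grp_alg F) (G : M2 -> rat) :
  (forall y, f y != 0 -> f y = 1 /\ h (h' y) = y) ->
  (forall j, (f (h j) != 0) && (h' (h j) == j) = P j) ->
  \sum_y f y * G y = \sum_(j | P j) G (h j).
Proof.
move=> H1 H2.
rewrite (bigID (fun y => f y != 0)) /= [X in _ + X]big1 ?addr0; last first.
  by move=> y /negPn/eqP ->; rewrite mul0r.
rewrite (reindex_onto h h'); last by move=> y /H1 [].
apply: eq_big => j; first by rewrite H2.
by move=> /andP [Hj _]; rewrite (H1 _ Hj).1 mul1r.
Qed.

Lemma sum_const_nz (K : rat) : \sum_(t : F | t != 0) K = (q - 1) * K.
Proof.
have E : \sum_(t : F) K = K + \sum_(t : F | t != 0) K by rewrite (bigD1 0).
have E2 : \sum_(t : F) K = K *+ #|F| by rewrite sumr_const.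
have -> : \sum_(t : F | t != 0) K = K *+ #|F| - K by rewrite -E2 E addrAC subrr add0r.
by rewrite mulrBl mul1r mulr_natl.
Qed.

Lemma sum_affine (G : F -> rat) (al be : F) : be != 0 ->
  \sum_t G (al - t * be) = \sum_t G t.
Proof.
move=> nz; rewrite [RHS](reindex_inj (h := fun t => al - t * be)) //.
by move=> x y /= /addrI /oppr_inj /(mulIf nz).
Qed.

Lemma pf_scale f (s a b c d : F) : s != 0 ->
  pf f (mk (s^-1 * a) (s^-1 * b) (s * c) (s * d)) = pf f (mk a b c d).
Proof.
move=> nz; rewrite !ffunE /in_SL2 /pz !mk00 !mk01 !mk10 !mk11.
have -> : s^-1 * a * (s * d) - s^-1 * b * (s * c) = a * d - b * c.
  by field.
by rewrite !mulf_eq0 !invr_eq0 (negbTE nz).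
Qed.

Definition swp (p : pat) : pat := (p.1.2, p.2, p.1.1.1, p.1.1.2).

Lemma pf_swap f (s a b c d : F) : s != 0 ->
  pf f (mk (- s * c) (- s * d) (s^-1 * a) (s^-1 * b)) = pf (fun p => f (swp p)) (mk a b c d).
Proof.
move=> nz; rewrite !ffunE /in_SL2 /pz !mk00 !mk01 !mk10 !mk11.
have -> : - s * c * (s^-1 * b) - - s * d * (s^-1 * a) = a * d - b * c.
  by field.
by rewrite !mulf_eq0 !invr_eq0 oppr_eq0 (negbTE nz).
Qed.

End G.
Arguments sum_const_nz {F} K.
Arguments sum_affine {F} G al be.

Section G.
Variable F : finFieldType.
Local Notation M2 := 'M[F]_2.
Local Notation q := (#|F|%:R : rat).

Definition eA : grp_alg F := pf (fun p => (p == patn 0)%:R).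
Definition eB : grp_alg F := pf (fun p => (p == patn 1)%:R).
Definition eP : grp_alg F := pf (fun p => (~~ p.1.2)%:R).

Lemma pf_supp g (y : M2) : pf g y != 0 -> in_SL2 y.
Proof. by rewrite ffunE; case: (in_SL2 y); rewrite ?eqxx. Qed.

Lemma inv_of (a d : F) : a * d = 1 -> d = a^-1.
Proof.
move=> H; have nz : a != 0 by apply/eqP => a0; move: H; rewrite a0 mul0r => /eqP; rewrite eq_sym oner_eq0.
by rewrite -[d]mul1r -(mulVf nz) -mulrA H mulr1.
Qed.

Lemma LA f : gmul eA (pf f) = pf (fun p => (q - 1) * f p).
Proof.
apply/ffunP => M; rewrite gmul_SL; last exact: pf_supp.
rewrite (sum_supp (P := fun s : F => s != 0) (h := fun s => mk s 0 0 s^-1) (h' := fun y => y 0 0)).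
- under eq_bigr => s nz.
    have -> : inv2 (mk s 0 0 s^-1) *m M = mk (s^-1 * M 0 0) (s^-1 * M 0 1) (s * M 1 0) (s * M 1 1).
      by rewrite /inv2 !mk00 !mk01 !mk10 !mk11 {1}[M]mk_eta mk_mul; congr mk; ring.
    rewrite pf_scale // -mk_eta.
  over.
  rewrite sum_const_nz !ffunE; case: (in_SL2 M) => //; by rewrite mulr0.
- move=> y; rewrite /eA ffunE; case S: (in_SL2 y); last by rewrite eqxx.
  case E: (pz y == patn 0); last by rewrite eqxx.
  move=> _; move/eqP: E; rewrite /pz /= => [[a0 /negbFE/eqP b0 /negbFE/eqP c0 d0]].
  split => //; rewrite [RHS]mk_eta b0 c0; congr mk.
  by apply/esym/inv_of; move/eqP: S; rewrite b0 mul0r subr0.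
- move=> j; rewrite mk00 eqxx andbT /eA ffunE /in_SL2 /pz !mk00 !mk01 !mk10 !mk11.
  case: (j =P 0) => [->|/eqP nz]; first by rewrite !mul0r subr0 (eq_sym 0 1) oner_eq0 eqxx.
  by rewrite mulfV // mul0r subr0 /= invr_eq0 nz !eqxx.
Qed.

Lemma LB f : gmul eB (pf f) = pf (fun p => (q - 1) * f (swp p)).
Proof.
apply/ffunP => M; rewrite gmul_SL; last exact: pf_supp.
rewrite (sum_supp (P := fun s : F => s != 0) (h := fun s => mk 0 s (- s^-1) 0) (h' := fun y => y 0 1)).
- under eq_bigr => s nz.
    have -> : inv2 (mk 0 s (- s^-1) 0) *m M = mk (- s * M 1 0) (- s * M 1 1) (s^-1 * M 0 0) (s^-1 * M 0 1).
      by rewrite /inv2 !mk00 !mk01 !mk10 !mk11 {1}[M]mk_eta mk_mul; congr mk; ring.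
    rewrite pf_swap // -mk_eta.
  over.
  rewrite sum_const_nz !ffunE; case: (in_SL2 M) => //; by rewrite mulr0.
- move=> y; rewrite /eB ffunE; case S: (in_SL2 y); last by rewrite eqxx.
  case E: (pz y == patn 1); last by rewrite eqxx.
  move=> _; move/eqP: E; rewrite /pz /= => [[/negbFE/eqP a0 b0 c0 /negbFE/eqP d0]].
  split => //; rewrite [RHS]mk_eta a0 d0; congr mk.
  apply/eqP; rewrite eq_sym -(opprK (y 1 0)) eqr_opp; apply/eqP/inv_of.
  by move/eqP: S; rewrite a0 mul0r sub0r mulrN.
- move=> j; rewrite mk01 eqxx andbT /eB ffunE /in_SL2 /pz !mk00 !mk01 !mk10 !mk11.
  case: (j =P 0) => [->|/eqP nz]; first by rewrite !mul0r sub0r oppr0 (eq_sym 0 1) oner_eq0 eqxx.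
  by rewrite mulr0 mulrN mulfV // sub0r opprK /= oppr_eq0 invr_eq0 nz !eqxx.
Qed.

Definition Uf (f : pat -> rat) (cn dn : bool) : rat :=
  if cn then (if dn then f (patn 6) + f (patn 4) + (q - 2) * f (patn 2)
              else f (patn 1) + (q - 1) * f (patn 5))
  else f (patn 0) + (q - 1) * f (patn 3).

Lemma sum_nz (g : bool -> rat) : \sum_(t : F) g (t != 0) = g false + (q - 1) * g true.
Proof.
rewrite (bigD1 0) //= eqxx -(sum_const_nz (F:=F)); congr (_ + _).
by apply: eq_bigr => t ->.
Qed.

Lemma sum_const_nz2 (e : F) (K : rat) : e != 0 ->
  \sum_(t : F | (t != 0) && (t != e)) K = (q - 2) * K.
Proof.
move=> nz; have H := sum_const_nz (F:=F) K; rewrite (bigD1 e nz) /= in H.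
have -> : (q - 2) * K = (q - 1) * K - K by ring.
rewrite -H; ring.
Qed.

Lemma Usum f (a b c d : F) : a * d - b * c = 1 ->
  \sum_t pf f (mk (a - t * c) (b - t * d) c d) = Uf f (c != 0) (d != 0).
Proof.
move=> H.
have E : forall t, pf f (mk (a - t * c) (b - t * d) c d) =
     f (a - t * c != 0, b - t * d != 0, c != 0, d != 0).
  move=> t; rewrite ffunE /in_SL2 /pz !mk00 !mk01 !mk10 !mk11.
  have -> : (a - t * c) * d - (b - t * d) * c = a * d - b * c by ring.
  by rewrite H eqxx.
under eq_bigr => t _ do rewrite E.
rewrite /Uf; case: (c =P 0) => [c0|/eqP cn].
  have ad : a * d = 1 by rewrite -H c0 mulr0 subr0.
  have an : a != 0 by apply/eqP => a0; move: ad; rewrite a0 mul0r => /eqP; rewrite eq_sym oner_eq0.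
  have dn : d != 0 by apply/eqP => d0; move: ad; rewrite d0 mulr0 => /eqP; rewrite eq_sym oner_eq0.
  rewrite c0 /=.
  under eq_bigr => t _ do rewrite mulr0 subr0 an dn.
  by rewrite (sum_affine (fun t => f (true, t != 0, false, true))) // (sum_nz (fun b => f (true, b, false, true))).
case: (d =P 0) => [d0|/eqP dn].
  have bc : b * c = -1 by rewrite -[b * c]opprK -H d0 mulr0 sub0r.
  have bn : b != 0 by apply/eqP => b0; move: bc; rewrite b0 mul0r => /eqP; rewrite eq_sym oppr_eq0 oner_eq0.
  rewrite d0 /=.
  under eq_bigr => t _ do rewrite mulr0 subr0 bn.
  by rewrite (sum_affine (fun t => f (t != 0, true, true, false))) // (sum_nz (fun b => f (b, true, true, false))).
rewrite /=.
pose G := fun s : F => f (s != 0, s != d^-1, true, true).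
transitivity (\sum_t G (a - t * c)).
  apply: eq_bigr => t _; rewrite /G; congr (f (_, _, _, _)).
  apply/negb_inj; rewrite !negbK.
  have -> : b - t * d = ((a - t * c) * d - 1) / c.
    by apply/(mulIf cn); rewrite mulfVK // -H; ring.
  rewrite mulf_eq0 invr_eq0 (negbTE cn) orbF subr_eq0.
  apply/eqP/eqP => [E1|->]; last by rewrite mulVf.
  by apply: inv_of; rewrite mulrC.
rewrite (sum_affine G) // /G (bigD1 0) //= eqxx.
have dv : d^-1 != 0 by rewrite invr_eq0.
rewrite eq_sym dv (bigD1 d^-1) //= dv eqxx.
rewrite (eq_bigr (fun _ => f (patn 2))); last by move=> s /andP [-> ->].
rewrite sum_const_nz2 //=; ring.
Qed.

Lemma LP f : gmul eP (pf f) = pf (fun p => (q - 1) * Uf f p.1.2 p.2).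
Proof.
apply/ffunP => M; rewrite gmul_SL; last exact: pf_supp.
rewrite (sum_supp (P := fun j : F * F => j.1 != 0) (h := fun j => mk j.1 j.2 0 j.1^-1)
   (h' := fun y => (y 0 0, y 0 1))).
- transitivity (\sum_(x : F | x != 0) \sum_(t : F) pf f (inv2 (mk x t 0 x^-1) *m M)).
    by rewrite pair_big_dep /=; apply: eq_big => [[x t]|[x t] _] //=; rewrite andbT.
  transitivity (\sum_(x : F | x != 0)
     \sum_(t : F) pf f (mk (M 0 0 - t * M 1 0) (M 0 1 - t * M 1 1) (M 1 0) (M 1 1))).
    apply: eq_bigr => x nz.
    under eq_bigr => t _.
      have -> : inv2 (mk x t 0 x^-1) *m M = mk (x^-1 * (M 0 0 - (x * t) * M 1 0))
          (x^-1 * (M 0 1 - (x * t) * M 1 1)) (x * M 1 0) (x * M 1 1).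
        by rewrite /inv2 !mk00 !mk01 !mk10 !mk11 {1}[M]mk_eta mk_mul; congr mk; field.
      rewrite pf_scale //.
    over.
    by rewrite [RHS](reindex_inj (mulfI nz)).
  case S: (in_SL2 M).
    rewrite Usum; last by move/eqP: S.
    by rewrite sum_const_nz ffunE S.
  rewrite ffunE S big1 // => x _; rewrite big1 // => t _.
  rewrite ffunE /in_SL2 !mk00 !mk01 !mk10 !mk11.
  have -> : (M 0 0 - t * M 1 0) * M 1 1 - (M 0 1 - t * M 1 1) * M 1 0 =
            M 0 0 * M 1 1 - M 0 1 * M 1 0 by ring.
  by move: S; rewrite /in_SL2 => ->.
- move=> y; rewrite /eP ffunE /pz /=; case S: (in_SL2 y); last by rewrite eqxx.
  case E: (y 1 0 != 0) => //= _.
  have c0 : y 1 0 = 0 by apply/eqP; move/negbT: E; rewrite negbK.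
  split => //; rewrite [RHS]mk_eta c0; congr mk.
  by apply/esym/inv_of; move/eqP: S; rewrite c0 mulr0 subr0.
- move=> [x t]; rewrite /= mk00 mk01 eqxx andbT /eP ffunE /in_SL2 /pz !mk00 !mk01 !mk10 !mk11.
  case: (x =P 0) => [->|/eqP nz]; first by rewrite !mul0r mulr0 subr0 (eq_sym 0 1) oner_eq0 eqxx.
  by rewrite mulfV // mulr0 subr0 /= !eqxx.
Qed.

End G.

Definition Vt (q c0 c1 c2 c3 c4 c5 c6 : rat) : target :=
  let r := q - 1 in
  (r*c0 + r*c1 + r^+2*(q-2)*c2 + r^+2*(c3+c4+c5+c6),
   r*c0 + r*c1 + 2*r*c2 - r*(c3+c4+c5+c6),
   r*c0 - r*c1 - r*c3 - r*c4 + r*c5 + r*c6,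
   mk (r*c0 - r*(q-2)*c2 + r^+2*c3 - r*c4 - r*c5)
      (r*c1 - r*(q-2)*c2 - r*c3 + r^+2*c5 - r*c6)
      (r*c1 - r*(q-2)*c2 - r*c4 - r*c5 + r^+2*c6)
      (r*c0 - r*(q-2)*c2 - r*c3 + r^+2*c4 - r*c6)).

Lemma tmulE (a b c a' b' c' : rat) (M M' : 'M[rat]_2) :
  ((a, b, c, M) : target) * (a', b', c', M') = (a * a', b * b', c * c', M *m M').
Proof. by rewrite mulmxE. Qed.

Lemma taddE (a b c a' b' c' : rat) (M M' : 'M[rat]_2) :
  ((a, b, c, M) : target) + (a', b', c', M') = (a + a', b + b', c + c', M + M').
Proof. by []. Qed.

Lemma Vt_mulA q f0 f1 f2 f3 f4 f5 f6 :
  Vt q ((q-1)*f0) ((q-1)*f1) ((q-1)*f2) ((q-1)*f3) ((q-1)*f4) ((q-1)*f5) ((q-1)*f6)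
  = Vt q 1 0 0 0 0 0 0 * Vt q f0 f1 f2 f3 f4 f5 f6.
Proof.
rewrite /Vt tmulE mk_mul; congr (_, _, _, _); try ring.
congr mk; ring.
Qed.

Lemma Vt_mulB q f0 f1 f2 f3 f4 f5 f6 :
  Vt q ((q-1)*f1) ((q-1)*f0) ((q-1)*f2) ((q-1)*f6) ((q-1)*f5) ((q-1)*f4) ((q-1)*f3)
  = Vt q 0 1 0 0 0 0 0 * Vt q f0 f1 f2 f3 f4 f5 f6.
Proof.
rewrite /Vt tmulE mk_mul; congr (_, _, _, _); try ring.
congr mk; ring.
Qed.

Lemma Vt_mulP q f0 f1 f2 f3 f4 f5 f6 :
  let u := (q-1) * (f0 + (q-1)*f3) in
  let v := (q-1) * (f1 + (q-1)*f5) in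
  let w := (q-1) * (f6 + f4 + (q-2)*f2) in
  Vt q u v w u w v w = Vt q 1 0 0 1 0 0 0 * Vt q f0 f1 f2 f3 f4 f5 f6.
Proof.
rewrite /Vt tmulE mk_mul /=; congr (_, _, _, _); try ring.
congr mk; ring.
Qed.

Definition Wrow (q : rat) (k : nat) (x : target) : rat :=
  let r := q - 1 in
  let T := 1 / (q * r * (q + 1)) in
  let s := (q - 2) / (2 * q * r) in
  let u := 1 / (q * r ^+ 2) in
  let s' := - (q - 2) / (2 * q * r ^+ 2) in
  let h := 1 / (2 * (q + 1)) in
  let h' := 1 / (2 * r * (q + 1)) in
  let al := 1 / (r * (q + 1)) in
  let be := - 1 / (r ^+ 2 * (q + 1)) in
  let tau := x.1.1.1 in let cp := x.1.1.2 in let cm := x.1.2 in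
  let m11 := x.2 0 0 in let m12 := x.2 0 1 in let m21 := x.2 1 0 in let m22 := x.2 1 1 in
  match k with
  | 0 => T * tau + s * cp + h * cm + al * m11 + al * m22
  | 1 => T * tau + s * cp - h * cm + al * m12 + al * m21
  | 2 => T * tau + u * cp + be * (m11 + m12 + m21 + m22)
  | 3 => T * tau + s' * cp - h' * cm + al * m11 + be * m21 + be * m22
  | 4 => T * tau + s' * cp - h' * cm + be * m11 + be * m12 + al * m22
  | 5 => T * tau + s' * cp + h' * cm + al * m12 + be * m21 + be * m22
  | _ => T * tau + s' * cp + h' * cm + be * m11 + be * m12 + al * m21
  end.

Lemma Vt_W q x : q != 0 -> q - 1 != 0 -> q + 1 != 0 ->
  Vt q (Wrow q 0 x) (Wrow q 1 x) (Wrow q 2 x) (Wrow q 3 x) (Wrow q 4 x) (Wrow q 5 x) (Wrow q 6 x) = x.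
Proof.
move=> q0 q1 q2; case: x => [[[a b] c] M].
rewrite (mk_eta M) /Vt /Wrow /= !mk00 !mk01 !mk10 !mk11.
have two : (2 : rat) != 0 by [].
congr (_, _, _, _); try (field; by rewrite ?q0 ?q1 ?q2 ?two).
congr mk; field; by rewrite ?q0 ?q1 ?q2 ?two.
Qed.

Lemma W_Vt q c0 c1 c2 c3 c4 c5 c6 : q != 0 -> q - 1 != 0 -> q + 1 != 0 ->
  let v := Vt q c0 c1 c2 c3 c4 c5 c6 in
  Wrow q 0 v = c0 /\ Wrow q 1 v = c1 /\ Wrow q 2 v = c2 /\ Wrow q 3 v = c3 /\
      Wrow q 4 v = c4 /\ Wrow q 5 v = c5 /\ Wrow q 6 v = c6.
Proof.
move=> q0 q1 q2; have two : (2 : rat) != 0 by [].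
rewrite /Wrow /Vt /= !mk00 !mk01 !mk10 !mk11.
repeat split; field; by rewrite ?q0 ?q1 ?q2 ?two.
Qed.

Import Num.Theory.

Section Main.
Variable F : finFieldType.
Variable t : F.
Hypothesis t0 : t != 0.
Hypothesis t1 : t != 1.
Local Notation q := (#|F|%:R : rat).

Definition rep (k : nat) : 'M[F]_2 :=
  match k with
  | 0 => mk 1 0 0 1 | 1 => mk 0 1 (-1) 0 | 2 => mk t (t - 1) 1 1
  | 3 => mk 1 1 0 1 | 4 => mk 1 0 1 1 | 5 => mk 1 1 (-1) 0 | _ => mk 0 1 (-1) 1 end.

Lemma pf_rep f k : (k < 7)%N -> pf f (rep k) = f (patn k).
Proof.
have tm1 : t - 1 != 0 by rewrite subr_eq0.
have m1 : (-1 : F) != 0 by rewrite oppr_eq0 oner_eq0.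
case: k => [|[|[|[|[|[|[|k]]]]]]] // _;
 rewrite ffunE /in_SL2 /pz /= !mk00 !mk01 !mk10 !mk11 ?mulr0 ?mul0r ?mulr1 ?mul1r ?subr0 ?sub0r ?opprK ?eqxx ?oner_eq0 ?m1 ?t0 ?tm1 //.
by rewrite opprB addrC subrK eqxx.
Qed.

Definition phi (x : grp_alg F) : target :=
  Vt q (x (rep 0)) (x (rep 1)) (x (rep 2)) (x (rep 3)) (x (rep 4)) (x (rep 5)) (x (rep 6)).

Lemma phi_pf f : phi (pf f) =
  Vt q (f (patn 0)) (f (patn 1)) (f (patn 2)) (f (patn 3)) (f (patn 4)) (f (patn 5)) (f (patn 6)).
Proof. by rewrite /phi !pf_rep. Qed.

Lemma phi_lin a x y : phi (gscale a x + y) = tscale a (phi x) + phi y.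
Proof.
rewrite /phi /gscale !ffunE /Vt /tscale taddE /= mk_scale mk_add.
congr (_, _, _, _); try ring.
congr mk; ring.
Qed.

Lemma tscale_mul a (s u : target) : tscale a (s * u) = tscale a s * u.
Proof.
case: s => [[[s1 s2] s3] S]; case: u => [[[u1 u2] u3] U].
rewrite /tscale !tmulE /= scalemxAl; congr (_, _, _, _); ring.
Qed.

Lemma pf_lin a f g : gscale a (pf f : grp_alg F) + pf g = pf (fun p => a * f p + g p).
Proof.
apply/ffunP => M; rewrite !ffunE.
by case: (in_SL2 M); rewrite ?mulr0 ?addr0.
Qed.

Lemma gmul_linl a (x y z : grp_alg F) : gmul (gscale a x + y) z = gscale a (gmul x z) + gmul y z.
Proof.
apply/ffunP => M; rewrite !ffunE mulr_sumr -big_split; apply: eq_bigr => y' _.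
rewrite mulr_sumr -big_split; apply: eq_bigr => z' _.
rewrite !ffunE /=; ring.
Qed.

Lemma gmul0 (z : grp_alg F) : gmul 0 z = 0.
Proof.
apply/ffunP => M; rewrite !ffunE big1 // => y _; rewrite big1 // => z' _.
by rewrite ffunE mul0r.
Qed.

Definition Sg (u : grp_alg F) : Prop :=
  (exists fu, u = pf fu) /\ forall f, exists g, gmul u (pf f) = pf g /\ phi (pf g) = phi u * phi (pf f).

Lemma S_lin a x y : Sg x -> Sg y -> Sg (gscale a x + y).
Proof.
move=> [[fx ->] Hx] [[fy ->] Hy]; split; first by exists (fun p => a * fx p + fy p); rewrite pf_lin.
move=> f; have [g1 [E1 P1]] := Hx f; have [g2 [E2 P2]] := Hy f.
exists (fun p => a * g1 p + g2 p); split; first by rewrite gmul_linl E1 E2 pf_lin.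
by rewrite -pf_lin phi_lin P1 P2 phi_lin mulrDl tscale_mul.
Qed.

Lemma S_mul u v : Sg u -> Sg v -> Sg (gmul u v).
Proof.
move=> [[fu Eu] Hu] [[fv Ev] Hv]; split.
  by have [g [E _]] := Hu fv; exists g; rewrite Ev E.
move=> f; have [g1 [E1 P1]] := Hv f; have [g2 [E2 P2]] := Hu g1.
exists g2; split; first by rewrite gmulA E1 E2.
have [g3 [E3 P3]] := Hu fv.
by rewrite P2 P1 Ev E3 P3 -Ev mulrA.
Qed.

Lemma mk0 : mk 0 0 0 0 = 0 :> 'M[rat]_2.
Proof.
apply/matrixP => i j; rewrite !mxE.
by case: i => [[|[|i]] Hi] //; case: j => [[|[|j]] Hj].
Qed.

Lemma pf0 : pf (fun _ => 0) = 0 :> grp_alg F.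
Proof. by apply/ffunP => M; rewrite !ffunE; case: (in_SL2 M). Qed.

Lemma phi0 : phi 0 = 0.
Proof.
rewrite -pf0 phi_pf /Vt !mulr0 !addr0 ?subr0 ?mk0.
by [].
Qed.

Lemma S_0 : Sg 0.
Proof.
split; first by exists (fun _ => 0); rewrite pf0.
move=> f; exists (fun _ => 0); rewrite gmul0 pf0 phi0 mul0r; split => //.
Qed.

Lemma S_scale a x : Sg x -> Sg (gscale a x).
Proof.
move=> Sx; have := S_lin a Sx S_0; by rewrite addr0.
Qed.

Lemma SA : Sg (eA F).
Proof.
split; first by exists (fun p => (p == patn 0)%:R).
move=> f; exists (fun p => (q - 1) * f p); split; first exact: LA.
by rewrite /eA !phi_pf /= Vt_mulA.
Qed.

Lemma SB : Sg (eB F).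
Proof.
split; first by exists (fun p => (p == patn 1)%:R).
move=> f; exists (fun p => (q - 1) * f (swp p)); split; first exact: LB.
by rewrite /eB !phi_pf /= Vt_mulB.
Qed.

Lemma SP : Sg (eP F).
Proof.
split; first by exists (fun p => (~~ p.1.2)%:R).
move=> f; exists (fun p => (q - 1) * Uf F f p.1.2 p.2); split; first exact: LP.
by rewrite /eP !phi_pf /= Vt_mulP.
Qed.

Hypothesis hq : (2 < #|F|)%N.

Lemma q_facts : q != 0 /\ q - 1 != 0 /\ q + 1 != 0.
Proof.
have H : (2%:R : rat) < q by rewrite ltr_nat.
split; [|split]; apply/eqP => E; lra.
Qed.

Definition ek k : grp_alg F := pf (fun p => (p == patn k)%:R).

Lemma pf_sc a f : gscale a (pf f : grp_alg F) = pf (fun p => a * f p).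
Proof. by apply/ffunP => M; rewrite !ffunE; case: (in_SL2 M); rewrite ?mulr0. Qed.

Lemma pf_add f g : (pf f : grp_alg F) + pf g = pf (fun p => f p + g p).
Proof. by apply/ffunP => M; rewrite !ffunE; case: (in_SL2 M); rewrite ?addr0. Qed.

Lemma BPe : gmul (eB F) (eP F) = pf (fun p => (q - 1) * (~~ (swp p).1.2)%:R).
Proof. exact: LB. Qed.
Lemma PBe : gmul (eP F) (eB F) = pf (fun p => (q - 1) * Uf F (fun p => (p == patn 1)%:R) p.1.2 p.2).
Proof. exact: LP. Qed.
Lemma BPBe : gmul (eB F) (gmul (eP F) (eB F)) =
  pf (fun p => (q - 1) * ((q - 1) * Uf F (fun p => (p == patn 1)%:R) (swp p).1.2 (swp p).2)).
Proof. by rewrite PBe LB. Qed.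
Lemma PBPe : gmul (eP F) (gmul (eB F) (eP F)) =
  pf (fun p => (q - 1) * Uf F (fun p => (q - 1) * (~~ (swp p).1.2)%:R) p.1.2 p.2).
Proof. by rewrite BPe LP. Qed.

Lemma S3 : Sg (ek 3).
Proof.
have -> : ek 3 = gscale (-1) (eA F) + eP F.
  rewrite /eA /eP pf_lin; apply: pf_eq => k.
  by case: k => [|[|[|[|[|[|[|k]]]]]]] //= _; ring.
exact: S_lin SA SP.
Qed.

Lemma S6 : Sg (ek 6).
Proof.
have [q0 [q1 q2]] := q_facts.
have -> : ek 6 = gscale (1 / (q - 1)) (gmul (eB F) (eP F)) + gscale (-1) (eB F).
  rewrite BPe /eB !pf_sc !pf_add; apply: pf_eq => k.
  by case: k => [|[|[|[|[|[|[|k]]]]]]] //= _; field.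
exact: S_lin (S_mul SB SP) (S_scale _ SB).
Qed.

Lemma S5 : Sg (ek 5).
Proof.
have [q0 [q1 q2]] := q_facts.
have -> : ek 5 = gscale (1 / (q - 1)) (gmul (eP F) (eB F)) + gscale (-1) (eB F).
  rewrite PBe /eB !pf_sc !pf_add; apply: pf_eq => k.
  by case: k => [|[|[|[|[|[|[|k]]]]]]] //= _; rewrite /Uf /=; field.
exact: S_lin (S_mul SP SB) (S_scale _ SB).
Qed.

Lemma S4 : Sg (ek 4).
Proof.
have [q0 [q1 q2]] := q_facts.
have -> : ek 4 = gscale (1 / (q - 1) ^+ 2) (gmul (eB F) (gmul (eP F) (eB F))) + gscale (-1) (eA F).
  rewrite BPBe /eA !pf_sc !pf_add; apply: pf_eq => k.
  by case: k => [|[|[|[|[|[|[|k]]]]]]] //= _; rewrite /Uf /=; field.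
exact: S_lin (S_mul SB (S_mul SP SB)) (S_scale _ SA).
Qed.

Lemma S2 : Sg (ek 2).
Proof.
have [q0 [q1 q2]] := q_facts.
have -> : ek 2 = gscale (1 / (q - 1) ^+ 2) (gmul (eP F) (gmul (eB F) (eP F))) +
   (gscale (-1) (ek 1) + (gscale (-1) (ek 4) + (gscale (-1) (ek 5) + gscale (-1) (ek 6)))).
  rewrite PBPe /ek !pf_sc !pf_add; apply: pf_eq => k.
  by case: k => [|[|[|[|[|[|[|k]]]]]]] //= _; rewrite /Uf /=; field.
apply: S_lin (S_mul SP (S_mul SB SP)) _.
apply: S_lin SB _; apply: S_lin S4 _; apply: S_lin S5 _; exact: S_scale S6.
Qed.

Lemma S_ek k : (k < 7)%N -> Sg (ek k).
Proof.
case: k => [|[|[|[|[|[|[|k]]]]]]] // _.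
- exact: SA.
- exact: SB.
- exact: S2.
- exact: S3.
- exact: S4.
- exact: S5.
- exact: S6.
Qed.

Lemma S_SCQ x : in_SCQ x -> Sg x.
Proof.
move=> /SCQ_pf [f ->].
have -> : pf f = gscale (f (patn 0)) (ek 0) + (gscale (f (patn 1)) (ek 1) +
   (gscale (f (patn 2)) (ek 2) + (gscale (f (patn 3)) (ek 3) + (gscale (f (patn 4)) (ek 4) +
   (gscale (f (patn 5)) (ek 5) + gscale (f (patn 6)) (ek 6)))))).
  rewrite /ek !pf_sc !pf_add; apply: pf_eq => k.
  by case: k => [|[|[|[|[|[|[|k]]]]]]] //= _; ring.
do 6 apply: S_lin (S_ek _) _ => //.
exact: S_scale (S_ek _).
Qed.

End Main.

Import Num.Theory.

Theorem theorem3p1 (F : finFieldType) (hq : (2 < #|F|)%N) :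
  exists phi : grp_alg F -> target,
    [/\ (forall (a : rat) (x y : grp_alg F), in_SCQ x -> in_SCQ y ->
           phi (gscale a x + y) = tscale a (phi x) + phi y),
        (forall x y : grp_alg F, in_SCQ x -> in_SCQ y ->
           phi (gmul x y) = phi x * phi y),
        (forall x y : grp_alg F, in_SCQ x -> in_SCQ y -> phi x = phi y -> x = y)
      & (forall t : target, exists2 x : grp_alg F, in_SCQ x & phi x = t)].
Proof.
have [t [t0 t1]] : exists t : F, t != 0 /\ t != 1.
  case: (pickP (fun x : F => (x != 0) && (x != 1))) => [x /andP [H1 H2]|H]; first by exists x.
  pose s : seq F := [:: 0; 1].
  have : (#|F| <= #|s|)%N.
    apply: subset_leq_card; apply/subsetP => x _; rewrite !inE.
    by move: (H x) => /negbT; rewrite negb_and !negbK.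
  move=> /leq_trans /(_ (card_size _)) /=; by rewrite leqNgt hq.
have [q0 [q1 q2]] := q_facts hq.
exists (phi t); split.
- by move=> a x y _ _; apply: phi_lin.
- move=> x y Sx /SCQ_pf [fy ->].
  have [_ H] := S_SCQ t0 t1 hq Sx.
  by have [g [-> ->]] := H fy.
- move=> x y /SCQ_pf [fx ->] /SCQ_pf [fy ->].
  rewrite !(phi_pf t0 t1) => E.
  have Hx := W_Vt (fx (patn 0)) (fx (patn 1)) (fx (patn 2)) (fx (patn 3)) (fx (patn 4)) (fx (patn 5)) (fx (patn 6)) q0 q1 q2.
  have Hy := W_Vt (fy (patn 0)) (fy (patn 1)) (fy (patn 2)) (fy (patn 3)) (fy (patn 4)) (fy (patn 5)) (fy (patn 6)) q0 q1 q2.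
  cbv zeta in Hx, Hy; rewrite E in Hx.
  move: Hx Hy => [x0 [x1 [x2 [x3 [x4 [x5 x6]]]]]] [y0 [y1 [y2 [y3 [y4 [y5 y6]]]]]].
  apply: pf_eq => k.
  case: k => [|[|[|[|[|[|[|k]]]]]]] // _.
  + by rewrite -x0 y0.
  + by rewrite -x1 y1.
  + by rewrite -x2 y2.
  + by rewrite -x3 y3.
  + by rewrite -x4 y4.
  + by rewrite -x5 y5.
  + by rewrite -x6 y6.
- move=> u.
  pose f := fun p : pat => let q := (#|F|%:R : rat) in
    if p == patn 0 then Wrow q 0 u else if p == patn 1 then Wrow q 1 u else
    if p == patn 2 then Wrow q 2 u else if p == patn 3 then Wrow q 3 u else
    if p == patn 4 then Wrow q 4 u else if p == patn 5 then Wrow q 5 u else Wrow q 6 u.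
  exists (pf f); first exact: pf_SCQ.
  by rewrite (phi_pf t0 t1) /f /= Vt_W.
Qed.
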